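(* Let $m\ge 1$ and consider $4m$ bits grouped into $m$ disjoint blocks of four bits each; index the bits of each block by $1,2,3,4$. Fix $\alpha\in\{2,3\}$ and set $A=\{1,\alpha\}$, $B=\{1,2,3,4\}\setminus A$. Let $(u,v)\in\{0,1\}^{4m}\times\{0,1\}^{4m}$ be random, where $u$ is the error vector and $v$ the flag vector, and suppose the distribution of $(u,v)$ is quasi-independent with strength $\{f^{(\rm in)},\delta_f^{(\rm in)},\delta_{\neg f}^{(\rm in)}\}$. For each block, with restrictions $u=(u_1,\dots,u_4)$, $v=(v_1,\dots,v_4)$ to that block, define the syndrome $s=u_1\oplus u_2\oplus u_3\oplus u_4$, the flagged set $F=\{i: v_i=1\}$, and the correction vector $c\in\{0,1\}^4$ by: $c=0$ if $s=0$; $c=e_1$ if $s=1$ and $F=\emptyset$; $c=e_{\min F}$ if $s=1$ and $F\neq\emptyset$ (here $e_i$ is the $i$-th unit vector). The block's output error bit is $U=\bigoplus_{i\in A}(u_i\oplus c_i)$ (the block has a decoding error iff $U=1$). The block's output flag bit $V$ is: $V=s$ if $|F|=0$; $V=0$ if $|F|=1$; and if $|F|\ge 2$, $V=1$ iff $F\cap A\neq\emptyset$ and $F\cap B\neq\emptyset$. Then the distribution of the $m$ pairs $(U,V)$ (one per block, i.e. the blocks viewed as $m$ bits with errors $U$ and flags $V$) is quasi-independent with strength $\{f^{(\rm out)},\delta_f^{(\rm out)},\delta_{\neg f}^{(\rm out)}\}$, where $$f^{(\rm out)}=4\delta_{\neg f}^{(\rm in)}+4\big(f^{(\rm in)}\big)^2,$$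 $$\delta_f^{(\rm out)}=2\delta_{\neg f}^{(\rm in)}+4f^{(\rm in)}\delta_f^{(\rm in)}+4\big(f^{(\rm in)}\big)^2\big(2\delta_{\neg f}^{(\rm in)}+3\delta_f^{(\rm in)}\big),$$ $$\delta_{\neg f}^{(\rm out)}=4\big(\delta_{\neg f}^{(\rm in)}\big)^2+8f^{(\rm in)}\delta_{\neg f}^{(\rm in)}.$$
   Context: Quasi-independent errors: Let $P(u,v)$ be a probability distribution on $\{0,1\}^n\times\{0,1\}^n$ for a set $\mathcal I$ of $n$ bits, where $u_i=1$ means bit $i$ has an error and $v_i=1$ means bit $i$ is flagged. $P$ is quasi-independent with strength $\{f,\delta_f,\delta_{\neg f}\}$ if for every pair of disjoint subsets $\mathcal J,\mathcal K\subseteq\mathcal I$ with $|\mathcal J|=r$, $|\mathcal K|=s$, and every subset $\mathcal L\subseteq\mathcal K$ with $|\mathcal L|=t$, the probability of the event ''every bit in $\mathcal J$ is unflagged and has an error, every bit in $\mathcal K$ is flagged, and every bit in $\mathcal L$ has an error'' is at most $(\delta_{\neg f})^r(\delta_f)^t f^{\,s-t}$. Interpretation: the four bits are the transversal measurement outcomes of a block of the 4-qubit code with stabilizers $\sigma_z^{\otimes4},\sigma_x^{\otimes4}$; $\alpha=3$ corresponds to decoding the logical $\sigma_z^L=\sigma_z\otimes I\otimes\sigma_z\otimes I$ and $\alpha=2$ to decoding $\sigma_x^L=\sigma_x\otimes\sigma_x\otimes I\otimes I$, and an error means the measured bit differs from the ideal one. *)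

(* Defs.v *)
From HB Require Import structures.
From mathcomp Require Import all_boot all_order all_algebra.
Set Implicit Arguments. Unset Strict Implicit. Unset Printing Implicit Defensive.
Import Order.TTheory GRing.Theory Num.Theory.
Local Open Scope ring_scope.

Definition is_distr (R : realFieldType) (I : finType)
  (P : {ffun I -> bool} * {ffun I -> bool} -> R) : Prop :=
  (forall x, 0 <= P x) /\ \sum_(x : {ffun I -> bool} * {ffun I -> bool}) P x = 1.

(* Quasi-independence with strength {f, df, dnf}:
   x.1 = error vector u, x.2 = flag vector v. *)
Definition quasi_indep (R : realFieldType) (I : finType)
  (P : {ffun I -> bool} * {ffun I -> bool} -> R) (f df dnf : R) : Prop :=
  forall J K L : {set I}, [disjoint J & K] -> L \subset K ->
    \sum_(x : {ffun I -> bool} * {ffun I -> bool}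
          | [&& [forall i in J, ~~ x.2 i && x.1 i],
                [forall i in K, x.2 i] &
                [forall i in L, x.1 i]]) P x
    <= dnf ^+ #|J| * df ^+ #|L| * f ^+ (#|K| - #|L|)%N.

(* One block of four bits; bit k (1-based) is index k-1 : 'I_4. *)
Definition setA (alpha : nat) : {set 'I_4} :=
  [set i : 'I_4 | (i.+1 == 1)%N || (i.+1 == alpha)%N].
Definition setB (alpha : nat) : {set 'I_4} := ~: setA alpha.

Definition syndrome (u : 'I_4 -> bool) : bool :=
  \big[addb/false]_(i < 4) u i.

Definition flagset (v : 'I_4 -> bool) : {set 'I_4} := [set i | v i].

Definition corr (u v : 'I_4 -> bool) (i : 'I_4) : bool :=
  syndrome u &&
  (if flagset v == set0 then (i == ord0)
   else (i \in flagset v) &&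
        [forall j : 'I_4, (j < i)%N ==> (j \notin flagset v)]).

Definition blockU (alpha : nat) (u v : 'I_4 -> bool) : bool :=
  \big[addb/false]_(i in setA alpha) (u i (+) corr u v i).

Definition blockV (alpha : nat) (u v : 'I_4 -> bool) : bool :=
  if #|flagset v| == 0%N then syndrome u
  else if #|flagset v| == 1%N then false
  else (flagset v :&: setA alpha != set0) && (flagset v :&: setB alpha != set0).

(* bits indexed by (block j, position i in block) *)
Definition out_map (m alpha : nat)
  (x : {ffun 'I_m * 'I_4 -> bool} * {ffun 'I_m * 'I_4 -> bool})
  : {ffun 'I_m -> bool} * {ffun 'I_m -> bool} :=
  ([ffun j => blockU alpha (fun i => x.1 (j, i)) (fun i => x.2 (j, i))],
   [ffun j => blockV alpha (fun i => x.1 (j, i)) (fun i => x.2 (j, i))]).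

Definition out_distr (R : realFieldType) (m alpha : nat)
  (P : {ffun 'I_m * 'I_4 -> bool} * {ffun 'I_m * 'I_4 -> bool} -> R)
  (y : {ffun 'I_m -> bool} * {ffun 'I_m -> bool}) : R :=
  \sum_(x : {ffun 'I_m * 'I_4 -> bool} * {ffun 'I_m * 'I_4 -> bool}
        | @out_map m alpha x == y) P x.

(* Main.v *)
Require Import Defs.
From HB Require Import structures.
From mathcomp Require Import all_boot all_order all_algebra.
Set Implicit Arguments. Unset Strict Implicit. Unset Printing Implicit Defensive.
Import Order.TTheory GRing.Theory Num.Theory.

Definition c0 : 'I_4 := @Ordinal 4 0 erefl.
Definition c1 : 'I_4 := @Ordinal 4 1 erefl.
Definition c2 : 'I_4 := @Ordinal 4 2 erefl.
Definition c3 : 'I_4 := @Ordinal 4 3 erefl.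

Lemma ord4P (i : 'I_4) : [\/ i = c0, i = c1, i = c2 | i = c3].
Proof.
case: i => [[|[|[|[|k]]]] Hk].
- by apply: Or41; apply: val_inj.
- by apply: Or42; apply: val_inj.
- by apply: Or43; apply: val_inj.
- by apply: Or44; apply: val_inj.
- by [].
Qed.

Lemma big4 (T : Type) (idx : T) (op : T -> T -> T) (F : 'I_4 -> T) :
  \big[op/idx]_(i < 4) F i = op (F c0) (op (F c1) (op (F c2) (op (F c3) idx))).
Proof.
rewrite !big_ord_recl big_ord0.
by congr (op (F _) (op (F _) (op (F _) (op (F _) _)))); apply: val_inj.
Qed.

Lemma forall4 (P : pred 'I_4) : [forall i, P i] = [&& P c0, P c1, P c2 & P c3].
Proof.
apply/forallP/and4P => [H|[H0 H1 H2 H3] i]; first by split; apply: H.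
by case: (ord4P i) => ->.
Qed.

Lemma neq0_4 (S : {set 'I_4}) : (S != set0) = [|| c0 \in S, c1 \in S, c2 \in S | c3 \in S].
Proof.
apply/set0Pn/or4P => [[i]|[]H]; try by eexists; exact H.
by case: (ord4P i) => -> H; [apply: Or41|apply: Or42|apply: Or43|apply: Or44].
Qed.

Lemma eq0_4 (S : {set 'I_4}) : (S == set0) = ~~ [|| c0 \in S, c1 \in S, c2 \in S | c3 \in S].
Proof. by rewrite -neq0_4 negbK. Qed.

Lemma card4 (S : {set 'I_4}) : #|S| = ((c0 \in S) + ((c1 \in S) + ((c2 \in S) + (c3 \in S))))%N.
Proof.
rewrite -sum1_card big_mkcond big4 /=.
by case: (c0 \in S); case: (c1 \in S); case: (c2 \in S); case: (c3 \in S).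
Qed.

Definition pattern := ('I_4 * 'I_4 * 'I_4 * 'I_4)%type.
Definition pc (p : pattern) (i : 'I_4) : nat :=
  match val i with 0 => val p.1.1.1 | 1 => val p.1.1.2 | 2 => val p.1.2 | _ => val p.2 end.
Definition zp : pattern := (c0, c0, c0, c0).
Definition upd (p : pattern) (i c : 'I_4) : pattern :=
  match val i with
  | 0 => (c, p.1.1.2, p.1.2, p.2)
  | 1 => (p.1.1.1, c, p.1.2, p.2)
  | 2 => (p.1.1.1, p.1.1.2, c, p.2)
  | _ => (p.1.1.1, p.1.1.2, p.1.2, c) end.
Definition mkp (l : seq ('I_4 * 'I_4)) : pattern := foldr (fun ic p => upd p ic.1 ic.2) zp l.

Definition allp : seq 'I_4 := [:: c0; c1; c2; c3].
Definition pats_gen (a1 b0 b1 : 'I_4) (t : nat) : seq pattern :=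
  let A := [:: c0; a1] in let B := [:: b0; b1] in
  match t with
  | 1 => [seq mkp [:: (a, c1); (b, c1)] | a : 'I_4 <- A, b : 'I_4 <- B] ++
         [seq mkp [:: (k, c2); (j, c1)] | k <- A, j <- B] ++
         [seq mkp [:: (k, c2); (j, c1)] | k <- B, j <- A]
  | 2 => [seq mkp [:: (i, c1)] | i <- allp] ++
         [seq mkp [:: (a, c2); (b, c2)] | a <- A, b <- B]
  | 3 => [seq mkp [:: (b, c1)] | b <- B] ++
         [seq mkp [:: (a, if (a < b)%N then c2 else c3); (b, if (a < b)%N then c3 else c2)] | a : 'I_4 <- A, b : 'I_4 <- B] ++
         [seq mkp [:: (ab.1, c2); (ab.2, c2); (j, c1)] | ab <- [seq (a, b) | a <- A, b <- B], j <- [seq i <- allp | (i != ab.1) && (i != ab.2)]] ++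
         [seq mkp [seq (i, if i == e then c3 else c2) | i <- Sx] |
              Sx <- [seq [seq i <- allp | i != k] | k <- allp], e <- Sx]
  | _ => [:: zp]
  end.
Definition pats (alpha t : nat) : seq pattern :=
  if alpha == 2 then pats_gen c1 c2 c3 t else pats_gen c2 c1 c3 t.

Definition hold1 (c : nat) (a b : bool) : bool :=
  if c == 1 then ~~ b && a else if c == 2 then b else if c == 3 then b && a else true.
Definition holds (p : pattern) (u v : 'I_4 -> bool) : bool :=
  [&& hold1 (pc p c0) (u c0) (v c0), hold1 (pc p c1) (u c1) (v c1),
      hold1 (pc p c2) (u c2) (v c2) & hold1 (pc p c3) (u c3) (v c3)].

Lemma holds_all p u v : holds p u v -> forall i, hold1 (pc p i) (u i) (v i).
Proof. by case/and4P => H0 H1 H2 H3 i; case: (ord4P i) => ->. Qed.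

Definition BE (alpha t : nat) (u v : 'I_4 -> bool) : bool :=
  if t == 1 then ~~ blockV alpha u v && blockU alpha u v
  else if t == 2 then blockV alpha u v
  else if t == 3 then blockV alpha u v && blockU alpha u v else true.

Lemma syndromeE u : syndrome u = u c0 (+) (u c1 (+) (u c2 (+) (u c3 (+) false))).
Proof. by rewrite /syndrome big4. Qed.

Lemma blockE_check alpha t (u v : 'I_4 -> bool) : (alpha == 2) || (alpha == 3) ->
  BE alpha t u v ==> has (fun p => holds p u v) (pats alpha t).
Proof.
move=> Ha.
rewrite /BE /blockV /blockU /corr big_mkcond big4 /= !syndromeE.
rewrite /flagset !card4 !neq0_4 !eq0_4 !forall4 /setB /setA !inE /=.
rewrite /holds.
move: (u c0) (u c1) (u c2) (u c3) (v c0) (v c1) (v c2) (v c3).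
case/orP: Ha => /eqP ->; case: t => [|[|[|[|t]]]];
 do 8! case; by [].
Qed.

Local Open Scope ring_scope.
Definition W (R : ringType) (x1 x2 x3 : R) (n : nat) : R :=
  if n == 1%N then x1 else if n == 2%N then x2 else if n == 3%N then x3 else 1.
Definition cnt (c : nat) (p : pattern) : nat :=
  Nat.add (pc p c0 == c) (Nat.add (pc p c1 == c) (Nat.add (pc p c2 == c) (pc p c3 == c))).
Definition w (R : ringType) (dnf f df : R) (p : pattern) : R :=
  dnf ^+ cnt 1 p * df ^+ cnt 3 p * f ^+ cnt 2 p.

Lemma id3 (R : comNzRingType) (dnf f df : R) :
  2 * dnf + 4 * f * df + 4 * f ^+ 2 * (2 * dnf + 3 * df) =
  dnf *+ 2 + (df * f) *+ 4 + (dnf * f ^+ 2) *+ 8 + (df * f ^+ 2) *+ 12.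
Proof.
set X := f ^+ 2.
rewrite mulrDr !mulr_natl !mulrnAl !mulrnAr -!mulrnA.
rewrite [f * df]mulrC [X * dnf]mulrC [X * df]mulrC.
by rewrite addrA.
Qed.
Lemma id1 (R : comNzRingType) (dnf f : R) :
  4 * dnf ^+ 2 + 8 * f * dnf = dnf ^+ 2 *+ 4 + (dnf * f) *+ 8.
Proof. by rewrite !mulr_natl !mulrnAl [f * dnf]mulrC. Qed.
Lemma id2 (R : comNzRingType) (dnf f : R) :
  4 * dnf + 4 * f ^+ 2 = dnf *+ 4 + (f ^+ 2) *+ 4.
Proof. by rewrite !mulr_natl. Qed.

Definition Wout (R : comNzRingType) (dnf f df : R) (t : nat) : R :=
  W (4 * dnf ^+ 2 + 8 * f * dnf) (4 * dnf + 4 * f ^+ 2)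
    (2 * dnf + 4 * f * df + 4 * f ^+ 2 * (2 * dnf + 3 * df)) t.

Lemma block_sum (R : comNzRingType) alpha t (dnf f df : R) :
  (alpha == 2)%N || (alpha == 3)%N ->
  \sum_(p <- pats alpha t) w dnf f df p = Wout dnf f df t.
Proof.
rewrite /Wout; case/orP => /eqP ->; case: t => [|[|[|[|t]]]];
  rewrite /pats /= !big_cons big_nil /w /cnt /= ?expr0 ?expr1 ?mulr1 ?mul1r ?addr0 /W /=;
  rewrite ?id1 ?id2 ?id3 ?mulrS ?mulr0n ?addr0 ?addrA //.
Qed.

Lemma pats_uniq alpha t : (alpha == 2)%N || (alpha == 3)%N -> uniq (pats alpha t).
Proof. by case/orP => /eqP ->; case: t => [|[|[|[|t]]]]. Qed.

Lemma cardsum (T : finType) (P : pred T) : #|[set i | P i]| = (\sum_i (P i : nat))%N.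
Proof.
rewrite -sum1_card big_mkcond /=; apply: eq_bigr => i _; rewrite inE.
by case: (P i).
Qed.

Lemma prodW (R : comNzRingType) (T : finType) (g : T -> nat) (x1 x2 x3 : R) :
  \prod_i W x1 x2 x3 (g i) =
  x1 ^+ #|[set i | g i == 1%N]| * x3 ^+ #|[set i | g i == 3%N]| * x2 ^+ #|[set i | g i == 2%N]|.
Proof.
have E i : W x1 x2 x3 (g i) = x1 ^+ (g i == 1%N) * x3 ^+ (g i == 3%N) * x2 ^+ (g i == 2%N).
  by rewrite /W; case: (g i) => [|[|[|[|n]]]] /=; rewrite ?expr0 ?expr1 ?mulr1 ?mul1r.
rewrite (eq_bigr _ (fun i _ => E i)) !big_split /= !prodrXr.
by rewrite !cardsum.
Qed.

Lemma wprod (R : comNzRingType) (dnf f df : R) p :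
  \prod_i W dnf f df (pc p i) = w dnf f df p.
Proof.
rewrite prodW /w /cnt !cardsum !big4 !plusE !addn0 //.
Qed.

Lemma cardK23 (T : finType) (g : T -> nat) :
  (#|[set b | (g b == 2%N) || (g b == 3%N)]| - #|[set b | g b == 3%N]|)%N = #|[set b | g b == 2%N]|.
Proof.
rewrite !cardsum.
have -> : (\sum_i ((g i == 2%N) || (g i == 3%N) : nat) = \sum_i (g i == 2%N : nat) + \sum_i (g i == 3%N : nat))%N.
  rewrite -big_split /=; apply: eq_bigr => i _.
  by case: (g i) => [|[|[|[|n]]]].
by rewrite addnK.
Qed.

Lemma union_bound (R : realFieldType) (X S : finType) (P : X -> R) (C : pred X)
  (H : S -> pred X) (F : pred S) :
  (forall x, 0 <= P x) -> (forall x, C x -> exists2 s, F s & H s x) ->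
  \sum_(x | C x) P x <= \sum_(s | F s) \sum_(x | H s x) P x.
Proof.
move=> P0 HC.
rewrite big_mkcond /= (eq_bigr (fun s => \sum_x (if H s x then P x else 0))); last first.
  by move=> s _; rewrite big_mkcond.
rewrite [X in _ <= X]big_mkcond /=.
rewrite (eq_bigr (fun s => \sum_x (if F s then (if H s x then P x else 0) else 0))); last first.
  by move=> s _; case: (F s) => //; rewrite big1.
rewrite exchange_big /=; apply: ler_sum => x _.
case Cx: (C x); last first.
  by apply: sumr_ge0 => s _; case: (F s); case: (H s x).
have [s Fs Hs] := HC x Cx.
rewrite (bigD1 s) //= Fs Hs lerDl.
by apply: sumr_ge0 => s' _; case: (F s'); case: (H s' x).
Qed.

Unset Implicit Arguments.
Theorem mainTheorem1 (R : realFieldType) (m alpha : nat) (f df dnf : R)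
  (P : {ffun 'I_m * 'I_4 -> bool} * {ffun 'I_m * 'I_4 -> bool} -> R) :
  (1 <= m)%N -> (alpha = 2%N \/ alpha = 3%N) ->
  is_distr P ->
  quasi_indep P f df dnf ->
  quasi_indep (@out_distr R m alpha P)
    (4 * dnf + 4 * f ^+ 2)
    (2 * dnf + 4 * f * df + 4 * f ^+ 2 * (2 * dnf + 3 * df))
    (4 * dnf ^+ 2 + 8 * f * dnf).
Proof.
move=> m1 Ha [P0 _] HQ J' K' L' dJK sLK.
have Ha' : (alpha == 2)%N || (alpha == 3)%N by case: Ha => ->.
set Cy := fun y : {ffun 'I_m -> bool} * {ffun 'I_m -> bool} =>
  [&& [forall i in J', ~~ y.2 i && y.1 i], [forall i in K', y.2 i] & [forall i in L', y.1 i]].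
have step1 : \sum_(y | Cy y) out_distr alpha P y = \sum_(x | Cy (out_map alpha x)) P x.
  rewrite [RHS](partition_big (@out_map m alpha) Cy) //.
  apply: eq_bigr => y Cyy; rewrite /out_distr; apply: eq_bigl => x /=.
  by case: eqP => [->|_]; rewrite ?Cyy ?andbT ?andbF.
rewrite step1.
pose t (j : 'I_m) : nat := if j \in J' then 1%N else if j \in L' then 3%N else if j \in K' then 2%N else 0%N.
pose Q (j : 'I_m) := fun p : pattern => p \in pats alpha (t j).
pose g (s : {ffun 'I_m -> pattern}) (b : 'I_m * 'I_4) := pc (s b.1) b.2.
pose Hold (s : {ffun 'I_m -> pattern}) (x : {ffun 'I_m * 'I_4 -> bool} * {ffun 'I_m * 'I_4 -> bool}) :=
  [&& [forall i in [set b | g s b == 1%N], ~~ x.2 i && x.1 i],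
      [forall i in [set b | (g s b == 2%N) || (g s b == 3%N)], x.2 i] &
      [forall i in [set b | g s b == 3%N], x.1 i]].
have step2 : \sum_(x | Cy (out_map alpha x)) P x <=
    \sum_(s in family Q) \sum_(x | Hold s x) P x.
  apply: union_bound => // x Cx.
  pose ub j := fun i => x.1 (j, i).
  pose vb j := fun i => x.2 (j, i).
  have BEj j : BE alpha (t j) (ub j) (vb j).
    move: Cx; rewrite /Cy /out_map /= => /and3P [/forallP HJ /forallP HK /forallP HL].
    rewrite /t; case: ifP => jJ.
      by have := HJ j; rewrite jJ /= !ffunE.
    case: ifP => jL.
      have jK : j \in K' by apply: (subsetP sLK).
      by have := HK j; have := HL j; rewrite jK jL /= !ffunE /BE /= => -> ->.
    case: ifP => jK //.
    by have := HK j; rewrite jK /= ffunE /BE /=.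
  pose s0 := [ffun j => odflt zp [pick p | (p \in pats alpha (t j)) && holds p (ub j) (vb j)]].
  have Hs j : (s0 j \in pats alpha (t j)) && holds (s0 j) (ub j) (vb j).
    rewrite ffunE; case: pickP => [p Hp //|H0].
    have := blockE_check (t j) (ub j) (vb j) Ha'; rewrite BEj /= => /hasP [p pin ph].
    by have := H0 p; rewrite pin ph.
  exists s0.
    by apply/familyP => j; have /andP[] := Hs j.
  have Hh b : hold1 (g s0 b) (x.1 b) (x.2 b).
    case: b => j i; have /andP[_ /holds_all] := Hs j; by apply.
  apply/and3P; split; apply/forallP => b; apply/implyP; rewrite inE => e;
    have := Hh b; rewrite /hold1.
  - by rewrite e.
  - by case/orP: e => /eqP -> //= /andP[].
  - by rewrite (eqP e) /= => /andP[].
apply: le_trans step2 _.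
have step3 : \sum_(s in family Q) \sum_(x | Hold s x) P x <=
    \sum_(s in family Q) \prod_j w dnf f df (s j).
  apply: ler_sum => s _.
  apply: le_trans (HQ _ _ _ _ _) _.
  - rewrite -setI_eq0; apply/eqP/setP => b; rewrite !inE.
    by case: (g s b) => [|[|[|[|n]]]].
  - by apply/subsetP => b; rewrite !inE => ->; rewrite orbT.
  rewrite cardK23 -prodW.
  rewrite -(eq_bigr _ (fun j _ => wprod dnf f df (s j))) pair_big /=.
  by [].
apply: le_trans step3 _.
rewrite -(bigA_distr_big_dep Q (fun (j : 'I_m) (p : pattern) => w dnf f df p)).
rewrite (eq_bigr (fun j => Wout dnf f df (t j))); last first.
  move=> j _; rewrite -(block_sum _ _ _ _ Ha') big_uniq ?pats_uniq //.
rewrite /Wout prodW.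
have E1 : [set j | t j == 1%N] = J'.
  apply/setP => j; rewrite inE /t.
  by case: (j \in J'); case: (j \in L'); case: (j \in K').
have jJK j : j \in J' -> j \notin K'.
  by move=> jJ; apply/negP => jK; move/disjoint_setI0: dJK => /setP /(_ j); rewrite !inE jJ jK.
have E3 : [set j | t j == 3%N] = L'.
  apply/setP => j; rewrite inE /t.
  case jJ: (j \in J').
    case jL: (j \in L') => //.
    by move: (jJK j jJ); rewrite (subsetP sLK j jL).
  by case: (j \in L'); case: (j \in K').
have E2 : [set j | t j == 2%N] = K' :\: L'.
  apply/setP => j; rewrite !inE /t.
  case jJ: (j \in J').
    by move: (jJK j jJ); case: (j \in K') => //; rewrite andbF.
  by case: (j \in L'); case: (j \in K').
rewrite E1 E2 E3 cardsD (setIidPr sLK).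
by [].
Qed.
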